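(* Let $G$ be a partial cube and let $f$ be a $\Theta$-graceful labeling of $G$. Let $C$ be an isometric $4$-cycle of $G$. Then for every two edges $xy$ and $uv$ of $C$ with $xy\,\Theta\,uv$, the following holds: $$d(x,u) < d(x,v) \ \Rightarrow\ f(x)+f(v) = f(y)+f(u),$$ where $d$ denotes the shortest-path distance in $G$.
   Context: A subgraph $H$ of a graph $G$ is isometric if $d_H(u,v)=d_G(u,v)$ for all vertices $u,v$ of $H$. A partial cube is a graph isomorphic to an isometric subgraph of some hypercube $Q_d$ (vertices: binary $d$-tuples, adjacent iff they differ in exactly one coordinate). The Djoković–Winkler relation $\Theta$ on the edges of $G$: edges $xy$ and $uv$ satisfy $xy\,\Theta\,uv$ iff $d(x,u)+d(y,v)\neq d(x,v)+d(y,u)$. On a partial cube $\Theta$ is an equivalence relation; its classes are called $\Theta$-classes. For a partial cube $G$ on $n$ vertices, a bijection $f:V(G)\to\{0,1,\ldots,n-1\}$ is a $\Theta$-graceful labeling if, labeling each edge $xy$ by $|f(x)-f(y)|$, all edges in the same $\Theta$-class receive the same label and distinct $\Theta$-classes receive distinct labels. *)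

(* Defs.v *)
(* Finite simple graphs as symmetric irreflexive relations. *)
From mathcomp Require Import all_boot.
Set Implicit Arguments.
Unset Strict Implicit.
Unset Printing Implicit Defensive.

Section Defs.
Variable T : finType.
Variable e : rel T.

(* In a connected graph such a walk exists with fewer than #|T| edges;
   if y is unreachable the value defaults to #|T| (never used below, since
   partial cubes are connected). *)
Definition dist (x y : T) : nat :=
  \big[minn/#|T|]_(n < #|T| | [exists p : n.-tuple T, path e x p && (last x p == y)]) n.

Definition hamming (d : nat) (a b : d.-tuple bool) : nat :=
  #|[set i : 'I_d | tnth a i != tnth b i]|.

Definition partial_cube : Prop :=
  (forall u v : T, connect e u v) /\
  exists (d : nat) (phi : T -> d.-tuple bool),
    forall u v : T, dist u v = hamming (phi u) (phi v).

Definition theta (x y u v : T) : Prop :=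
  e x y /\ e u v /\ dist x u + dist y v <> dist x v + dist y u.

Definition absdiff (a b : nat) : nat := maxn a b - minn a b.

Definition theta_graceful (f : T -> 'I_#|T|) : Prop :=
  bijective f /\
  forall x y u v : T, e x y -> e u v ->
    (theta x y u v <-> absdiff (f x) (f y) = absdiff (f u) (f v)).

Definition iso_4cycle (c0 c1 c2 c3 : T) : Prop :=
  uniq [:: c0; c1; c2; c3] /\
  e c0 c1 /\ e c1 c2 /\ e c2 c3 /\ e c3 c0 /\
  dist c0 c2 = 2 /\ dist c1 c3 = 2.

Definition cyc_edge (c0 c1 c2 c3 x y : T) : Prop :=
  (x, y) \in [:: (c0, c1); (c1, c0); (c1, c2); (c2, c1);
                 (c2, c3); (c3, c2); (c3, c0); (c0, c3)].
End Defs.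

(* Main.v *)
Require Import Defs.
From mathcomp Require Import all_boot zify.
Set Implicit Arguments.
Set Implicit Arguments. Unset Strict Implicit.

Lemma bigmin_le (I:eqType) (r: seq I) (P : pred I) (F : I -> nat) i0 (x0:nat) :
  i0 \in r -> P i0 -> \big[minn/x0]_(i <- r | P i) F i <= F i0.
Proof.
elim: r => // a r IH; rewrite inE big_cons; case/orP => [/eqP<-|h] hP.
  by rewrite hP geq_minl.
by case: (P a); [rewrite geq_min IH ?orbT | exact: IH].
Qed.

Section S.
Variable T : finType.
Variable e : rel T.

Lemma dist_le x y n (p : n.-tuple T) : n < #|T| -> path e x p -> last x p = y -> dist e x y <= n.
Proof.
move=> hn hp hl; rewrite /dist.
apply: (@bigmin_le _ _ _ _ (Ordinal hn)) => //=; first exact: mem_index_enum.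
by apply/existsP; exists p; rewrite hp hl eqxx.
Qed.

Lemma dist_gt0 x y : x != y -> 0 < dist e x y.
Proof.
move=> hxy; rewrite /dist; apply: (big_ind (fun m => 0 < m)).
- by apply/card_gt0P; exists x.
- by move=> a b ha hb; rewrite leq_min ha hb.
move=> [[|n] hn] /= /existsP [p /andP [_ hl]] //.
by move: hl; rewrite (tuple0 p) /= => /eqP h; rewrite h eqxx in hxy.
Qed.

Lemma dist_edge x y : irreflexive e -> e x y -> dist e x y = 1.
Proof.
move=> irr hxy.
have hne : x != y by apply/eqP => h; rewrite h irr in hxy.
apply/eqP; rewrite eqn_leq dist_gt0 // andbT.
apply: (@dist_le _ _ 1 [tuple y]) => /=; last by [].
  by rewrite (cardD1 x) (cardD1 y) !inE eq_sym hne.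
by rewrite hxy.
Qed.
End S.
Unset Strict Implicit.

Section S.
Variable T : finType.
Variable e : rel T.
Hypothesis Hpc : partial_cube e.

Lemma dist_sym x y : dist e x y = dist e y x.
Proof.
case: Hpc => _ [d [phi H]]; rewrite !H /hamming.
by apply: eq_card => i; rewrite !inE eq_sym.
Qed.

Lemma dist_xx x : dist e x x = 0.
Proof.
case: Hpc => _ [d [phi H]]; rewrite !H /hamming.
by apply/eqP; rewrite cards_eq0; apply/eqP/setP => i; rewrite !inE eqxx.
Qed.
End S.

Ltac dis := match goal with |- is_true (_ || _) -> _ => case/orP; [|dis] | _ => idtac end.

Theorem lemma1 (T : finType) (e : rel T)
  (esym : symmetric e) (eirr : irreflexive e)
  (Hpc : partial_cube e)
  (f : T -> 'I_#|T|) (Hf : theta_graceful e f)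
  (c0 c1 c2 c3 : T) (HC : iso_4cycle e c0 c1 c2 c3)
  (x y u v : T) :
  cyc_edge c0 c1 c2 c3 x y -> cyc_edge c0 c1 c2 c3 u v ->
  theta e x y u v ->
  dist e x u < dist e x v ->
  f x + f v = f y + f u.
Proof.
case: HC => Hu [e01 [e12 [e23 [e30 [d02 d13]]]]].
case: Hf => [[g fK _] Hth].
have finj : injective f := can_inj fK.
have D01 := dist_edge eirr e01.
have D12 := dist_edge eirr e12.
have D23 := dist_edge eirr e23.
have D30 := dist_edge eirr e30.
have D10 : dist e c1 c0 = 1 by rewrite dist_sym.
have D21 : dist e c2 c1 = 1 by rewrite dist_sym.
have D32 : dist e c3 c2 = 1 by rewrite dist_sym.
have D03 : dist e c0 c3 = 1 by rewrite dist_sym.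
have D20 : dist e c2 c0 = 2 by rewrite dist_sym.
have D31 : dist e c3 c1 = 2 by rewrite dist_sym.
have Dxx := dist_xx Hpc.
have n02 : c0 != c2 by move: Hu; rewrite /= !inE; case: (c0 == c2) => //; rewrite !orbT.
have Fne : (f c0 : nat) != f c2.
  by apply: contra n02 => /eqP h; apply/eqP; apply: finj; apply: val_inj.
have K : f c0 + f c2 = f c1 + f c3.
  have h1 : absdiff (f c0) (f c1) = absdiff (f c3) (f c2).
    apply/(Hth _ _ _ _ e01); first by rewrite esym.
    split; first by []. split; first by rewrite esym.
    by rewrite D03 D12 d02 d13.
  have h2 : absdiff (f c0) (f c3) = absdiff (f c1) (f c2).
    apply/(Hth _ _ _ _ _ e12); first by rewrite esym.
    split; first by rewrite esym. split; first by [].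
    by rewrite D01 D32 d02 D31.
  move: h1 h2 Fne; rewrite /absdiff; move/eqP; lia.
rewrite /cyc_edge !inE !xpair_eqE.
move=> h1 h2 [_ [_ Ht]] Hl; move: Ht Hl.
move: h1 h2.
by dis => /andP [/eqP -> /eqP ->]; dis => /andP [/eqP -> /eqP ->];
  rewrite ?Dxx ?D01 ?D12 ?D23 ?D30 ?D10 ?D21 ?D32 ?D03 ?D20 ?D31 ?d02 ?d13 //; lia.
Qed.
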